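(* Let $\alpha,\beta,\gamma\in I(d)$ with $\alpha\le\beta\le\gamma$. For every $m\ge1$, the map sending a nonvanishing skew-symmetric notched bitableau $(P,Q)$ on $\bar\beta\times\beta$ with rows $P_1,\dots,P_r$, $Q_1,\dots,Q_r$ to $f_{\theta_1,\beta}\cdots f_{\theta_r,\beta}$, where $\theta_i=P_i\cup(\beta\setminus Q_i)$, is a bijection from the set of degree-$2m$ nonvanishing skew-symmetric notched bitableaux on $\bar\beta\times\beta$ bounded by $T_\alpha,W_\gamma$ onto the set of degree-$m$ standard monomials on $Y^\gamma_{\alpha,\beta}$.
   Context: Notation: $m^*=2d+1-m$; $I(d)$ is the set of $d$-subsets of $\{1,\dots,2d\}$ containing exactly one of $m,m^*$ for each $m$ and having an even number of elements $>d$; $v\le w$ iff $v_i\le w_i$ for sorted entries; $\bar\beta=\{1,\dots,2d\}\setminus\beta$. For $\theta\in I(d)$ with $\theta\setminus\beta=\{r_1<\dots<r_{2s}\}$, $f_{\theta,\beta}$ is the Pfaffian of the skew-symmetric $2s\times2s$ matrix $N$ with $N_{ij}=X_{(r_i,r_j^* )}$ for $i<j$, an element of $P=k[X_{(r,c)}:r\notin\beta,c\in\beta,r<c^*]$; the $\beta$-degree of $\theta$ is $s$. A product $f_{\theta_1,\beta}\cdots f_{\theta_r,\beta}$ ($\theta_i\in I(d)$) is a standard monomial on $Y^\gamma_{\alpha,\beta}$ if $\alpha\le\theta_1\le\dots\le\theta_r\le\gamma$ and each $\theta_i$ satisfies $\theta_i<\beta$ or $\theta_i>\beta$; its degree is the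 sum of the $\beta$-degrees. $T_\alpha$ is any subset of $\bar\beta\times\beta$ whose set of first coordinates is $\alpha\setminus\beta$ and set of second coordinates is $\beta\setminus\alpha$ (each coordinate appearing once); $W_\gamma$ likewise with $\gamma\setminus\beta$, $\beta\setminus\gamma$. Notched bitableaux. A notched bitableau is a pair $(P,Q)$ of arrays of the same shape of finitely many left-justified rows (numbered from top) of positive integers; $P_i,Q_i$ the multisets of row $i$; degree = number of boxes of $P$. Write $A-B\le A'-B'$ if $|A^{\le z}|-|B^{\le z}|\ge|A'^{\le z}|-|B'^{\le z}|$ for all $z$; for $|A|=|B|$ with sorted elements $\lambda_j,\delta_j$, $A-B<\emptyset$ (resp. $>\emptyset$) means $\lambda_j<\delta_j$ (resp. $>$) for all $j$. Semistandard: rows strictly increasing and $P_i-Q_i\le P_{i+1}-Q_{i+1}$; nonvanishing: every row $<\emptyset$ or $>\emptyset$. Skew-symmetric: semistandard, even row lengths, and duality (dual of the entry in row $i$, column $j$ of $P$ (resp. $Q$) is the entry in row $i$, column $k_i+1-j$ of $Q$ (resp. $P$); $x<y\Rightarrow\mathrm{dual}(x)>\mathrm{dual}(y)$, $x=y\Rightarrow\mathrm{dual}(x)=\mathrm{dual}(y)$). On $\bar\beta\times\beta$: entries of $P$ in $\bar\beta$, of $Q$ in $\beta$, each entry plus its dual equal to $2d+1$. For finite $S\subseteq\mathbb N^2$, $S_{(1)},S_{(2)}$ are the multisets of coordinates. $(P,Q)$ with $r$ rows is bounded by $T,W$ if $T_{(1)}-T_{(2)}\le P_1-Q_1$ and $P_r-Q_r\le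 W_{(1)}-W_{(2)}$. *)

(* Defs.v *)
From mathcomp Require Import all_boot all_order all_algebra.
Set Implicit Arguments. Unset Strict Implicit. Unset Printing Implicit Defensive.
Import Order.TTheory GRing.Theory Num.Theory.

(* Finite subsets of {1,...,2d} and multisets of positive integers are
   represented by sequences of naturals; sets are strictly increasing. *)

Definition dualn (d m : nat) : nat := (2 * d).+1 - m.

Definition inI (d : nat) (t : seq nat) : bool :=
  [&& sorted ltn t, size t == d, all (fun x => 0 < x <= 2 * d) t,
      all (fun m => (m \in t) != (dualn d m \in t)) (iota 1 (2 * d)) &
      ~~ odd (count (fun x => d < x) t)].

Definition leS (v w : seq nat) : bool := all2 leq (sort leq v) (sort leq w).
Definition ltS (v w : seq nat) : bool := leS v w && (sort leq v != sort leq w).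

Definition setdiff (A B : seq nat) : seq nat := [seq x <- A | x \notin B].
Definition betabar (d : nat) (beta : seq nat) : seq nat :=
  setdiff (iota 1 (2 * d)) beta.

Definition cnt_le (z : nat) (A : seq nat) : nat := count (fun x => x <= z) A.

Definition diff_le (A B A' B' : seq nat) : Prop :=
  forall z : nat,
    ((cnt_le z A')%:Z - (cnt_le z B')%:Z <= (cnt_le z A)%:Z - (cnt_le z B)%:Z)%R.

(* A - B < emptyset, A - B > emptyset  (|A| = |B|, sorted entries) *)
Definition lt_empty (A B : seq nat) : bool := all2 ltn (sort leq A) (sort leq B).
Definition gt_empty (A B : seq nat) : bool :=
  all2 (fun x y => y < x) (sort leq A) (sort leq B).

(* A notched bitableau (P,Q): list of rows (P_i, Q_i), top row first. *)
Definition bitableau := seq (seq nat * seq nat).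

Definition tdegree (T : bitableau) : nat := sumn [seq size r.1 | r <- T].

Definition semistandard (T : bitableau) : Prop :=
  [/\ all (fun r => (size r.1 == size r.2) && (0 < size r.1)) T,
      all (fun r => sorted ltn r.1 && sorted ltn r.2) T &
      forall i, i.+1 < size T ->
        diff_le (nth ([::], [::]) T i).1 (nth ([::], [::]) T i).2
                (nth ([::], [::]) T i.+1).1 (nth ([::], [::]) T i.+1).2].

Definition nonvanishing (T : bitableau) : bool :=
  all (fun r => lt_empty r.1 r.2 || gt_empty r.1 r.2) T.

(* pairs (entry, dual entry): dual of P(i,j) is Q(i,k_i+1-j) and vice versa *)
Definition dual_pairs (T : bitableau) : seq (nat * nat) :=
  flatten [seq let k := size r.1 in
             [seq (nth 0 r.1 j, nth 0 r.2 (k - 1 - j)) | j <- iota 0 k] ++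
             [seq (nth 0 r.2 j, nth 0 r.1 (k - 1 - j)) | j <- iota 0 k] | r <- T].

Definition skew_symmetric (T : bitableau) : Prop :=
  [/\ semistandard T,
      all (fun r => ~~ odd (size r.1)) T &
      forall p q, p \in dual_pairs T -> q \in dual_pairs T ->
        (p.1 < q.1 -> q.2 < p.2) /\ (p.1 = q.1 -> p.2 = q.2)].

Definition skew_symmetric_on (d : nat) (beta : seq nat) (T : bitableau) : Prop :=
  [/\ skew_symmetric T,
      all (fun r => all (fun x => x \in betabar d beta) r.1) T,
      all (fun r => all (fun x => x \in beta) r.2) T &
      all (fun p => p.1 + p.2 == (2 * d).+1) (dual_pairs T)].

(* bounded by T_alpha, W_gamma: (T_alpha)_(1) = alpha \ beta,
   (T_alpha)_(2) = beta \ alpha, and similarly for W_gamma *)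
Definition bounded (alpha beta gamma : seq nat) (T : bitableau) : Prop :=
  [/\ 0 < size T,
      diff_le (setdiff alpha beta) (setdiff beta alpha)
              (head ([::], [::]) T).1 (head ([::], [::]) T).2 &
      diff_le (last ([::], [::]) T).1 (last ([::], [::]) T).2
              (setdiff gamma beta) (setdiff beta gamma)].

Definition theta_of (beta : seq nat) (r : seq nat * seq nat) : seq nat :=
  sort leq (r.1 ++ setdiff beta r.2).

(* the map (P,Q) |-> f_{theta_1,beta} ... f_{theta_r,beta}, with the
   monomial recorded as its sequence of indices theta_1, ..., theta_r *)
Definition tab_to_mon (beta : seq nat) (T : bitableau) : seq (seq nat) :=
  [seq theta_of beta r | r <- T].

(* beta-degree of theta: |theta \ beta| = 2s *)
Definition bdeg (beta theta : seq nat) : nat := (size (setdiff theta beta)) %/ 2.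

Definition standard_mon (d : nat) (alpha beta gamma : seq nat) (S : seq (seq nat)) : Prop :=
  [/\ all (inI d) S,
      path leS alpha (rcons S gamma) &
      all (fun th => ltS th beta || ltS beta th) S].

Definition mdegree (beta : seq nat) (S : seq (seq nat)) : nat :=
  sumn [seq bdeg beta th | th <- S].

Definition tab_set (d m : nat) (alpha beta gamma : seq nat) (T : bitableau) : Prop :=
  [/\ skew_symmetric_on d beta T, nonvanishing T, bounded alpha beta gamma T &
      tdegree T = 2 * m].

Definition mon_set (d m : nat) (alpha beta gamma : seq nat) (S : seq (seq nat)) : Prop :=
  standard_mon d alpha beta gamma S /\ mdegree beta S = m.

(* Main.v *)
Require Import Defs.
From mathcomp Require Import all_boot all_order all_algebra zify.
Set Implicit Arguments. Unset Strict Implicit. Unset Printing Implicit Defensive.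

Lemma perm_count (T : eqType) (p : pred T) (s1 s2 : seq T) : perm_eq s1 s2 -> count p s1 = count p s2.
Proof. by move/permP. Qed.

Lemma dual_range d m : 0 < m <= 2*d -> 0 < dualn d m <= 2*d.
Proof. rewrite /dualn; lia. Qed.

Lemma dualK d m : m <= 2*d -> dualn d (dualn d m) = m.
Proof. rewrite /dualn; lia. Qed.

Lemma inI_pair d t m : inI d t -> 0 < m <= 2*d -> (m \in t) = ~~ (dualn d m \in t).
Proof.
case/and5P => _ _ _ /allP H _ hm.
have := H m; rewrite mem_iota.
have -> : (1 <= m < 1 + 2 * d) by lia.
by move=> /(_ isT); case: (m \in t); case: (dualn d m \in t).
Qed.

Lemma inI_range d t x : inI d t -> x \in t -> 0 < x <= 2*d.
Proof. by case/and5P => _ _ /allP H _ _ /H. Qed.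

Lemma inI_sorted d t : inI d t -> sorted ltn t.
Proof. by case/and5P. Qed.

Lemma inI_uniq d t : inI d t -> uniq t.
Proof. by move/inI_sorted; rewrite ltn_sorted_uniq_leq => /andP[]. Qed.

Lemma inI_size d t : inI d t -> size t = d.
Proof. by case/and5P => _ /eqP. Qed.

Lemma mem_map_dual d (P : seq nat) x : all (fun y => 0 < y <= 2*d) P -> 0 < x <= 2*d ->
  (x \in map (dualn d) P) = (dualn d x \in P).
Proof.
move=> /allP HP hx; apply/mapP/idP.
  by case=> y yP ->; rewrite dualK //; have := HP y yP; lia.
by move=> h; exists (dualn d x) => //; rewrite dualK //; lia.
Qed.

Lemma map_dual_range d (P : seq nat) x : all (fun y => 0 < y <= 2*d) P ->
  x \in map (dualn d) P -> 0 < x <= 2*d.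
Proof. by move=> /allP HP /mapP[y /HP hy ->]; apply: dual_range. Qed.

Lemma count_setdiff (p : pred nat) B Q : uniq B -> uniq Q -> all (mem B) Q ->
  count p (setdiff B Q) + count p Q = count p B.
Proof.
move=> uB uQ /allP QB.
rewrite -(perm_count p (permEl (perm_filterC (mem Q) B))) count_cat addnC.
congr (_ + _); apply: perm_count; apply: uniq_perm; rewrite ?filter_uniq //.
move=> x; rewrite mem_filter; case xQ: (x \in Q); last by rewrite /= andbC; case: (x \in B) => //; exact: negbTE. 
 symmetry; apply/andP; split; [exact: xQ | exact: QB].
Qed.

Lemma count_setdiff2 (p : pred nat) A B : uniq A -> uniq B ->
  count p A + count p (setdiff B A) = count p B + count p (setdiff A B).
Proof.
move=> uA uB.
rewrite -{1}(perm_count p (permEl (perm_filterC (mem B) A))).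
rewrite -{1}(perm_count p (permEl (perm_filterC (mem A) B))).
rewrite !count_cat.
have -> : count p [seq x <- A | mem B x] = count p [seq x <- B | mem A x].
  apply: perm_count; apply: uniq_perm; try exact: filter_uniq.
  by move=> x; rewrite !mem_filter andbC.
rewrite -!addnA; congr (_ + _). rewrite addnC. by [].
Qed.

Lemma all2_cnt s t : all2 leq s t -> forall z, cnt_le z t <= cnt_le z s.
Proof.
elim: s t => [|x s IH] [|y t] //= /andP[xy H] z.
rewrite /cnt_le /=; have := IH _ H z; rewrite /cnt_le.
case: (leqP y z) => yz; case: (leqP x z) => xz /=; lia.
Qed.

Lemma sorted_cnt_nth s z i : sorted leq s -> i < cnt_le z s -> nth 0 s i <= z.
Proof.
elim: s i => [|x s IH] i //=.
move=> hs; have hs' := path_sorted hs.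
case: i => [|i] /=.
  rewrite /cnt_le /=; case: (leqP x z) => //= xz /= hc.
  have : has (fun y => y <= z) s by rewrite has_count.
  case/hasP => y ys yz.
  move: hs; rewrite path_sortedE; last exact: leq_trans.
  case/andP => /allP /(_ y ys) xy _; lia.
rewrite /cnt_le /= => h; apply: IH => //; rewrite /cnt_le; move: h.
case: (x <= z) => /=; lia.
Qed.

Lemma sorted_cnt_self s i : sorted leq s -> i < size s -> i < cnt_le (nth 0 s i) s.
Proof.
elim: s i => [|x s IH] i //= hs.
have hs' := path_sorted hs.
move: (hs); rewrite path_sortedE; last exact: leq_trans.
case/andP => /allP xa _.
case: i => [|i] /= hi.
  by rewrite /cnt_le /= leqnn.
have := IH i hs' hi; rewrite /cnt_le /=.
have -> : x <= nth 0 s i by apply: xa; apply: mem_nth.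
by [].
Qed.

Lemma all2_nth (r : rel nat) s t : size s = size t ->
  (forall i, i < size s -> r (nth 0 s i) (nth 0 t i)) -> all2 r s t.
Proof.
elim: s t => [|x s IH] [|y t] //= [eq] H.
rewrite (H 0 isT) /=; apply: IH => // i hi; exact: (H i.+1).
Qed.

Lemma sorted_cnt_all2 s t : sorted leq s -> sorted leq t -> size s = size t ->
  (forall z, cnt_le z t <= cnt_le z s) -> all2 leq s t.
Proof.
move=> hs ht eq H; apply: all2_nth => // i hi.
apply: sorted_cnt_nth => //.
have hi' : i < size t by rewrite -eq.
exact: leq_trans (sorted_cnt_self ht hi') (H _).
Qed.

Lemma leS_cnt v w : size v = size w ->
  leS v w <-> (forall z, cnt_le z w <= cnt_le z v).
Proof.
move=> eq; rewrite /leS.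
have cv : forall z s, cnt_le z (sort leq s) = cnt_le z s.
  by move=> z s; apply: perm_count; apply: permEl; apply: perm_sort.
split.
  by move=> /all2_cnt H z; have := H z; rewrite !cv.
move=> H; apply: sorted_cnt_all2; try exact: (sort_sorted leq_total).
  by rewrite !size_sort.
by move=> z; rewrite !cv.
Qed.

Lemma diff_leE A B A' B' : diff_le A B A' B' <->
  forall z, cnt_le z A' + cnt_le z B <= cnt_le z A + cnt_le z B'.
Proof. by split=> H z; have := H z; lia. Qed.
Definition rowok d beta (r : seq nat * seq nat) : Prop :=
 [/\ sorted ltn r.1, sorted ltn r.2, all (fun x => x \in betabar d beta) r.1,
     all (fun x => x \in beta) r.2 &
   [/\ size r.1 = size r.2, 0 < size r.1, ~~ odd (size r.1) &
      forall j, j < size r.1 -> nth 0 r.1 j + nth 0 r.2 (size r.1 - 1 - j) = (2*d).+1]].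

Definition row_of (beta th : seq nat) := (setdiff th beta, setdiff beta th).

Lemma betabar_mem d beta x : (x \in betabar d beta) = (0 < x <= 2*d) && (x \notin beta).
Proof. by rewrite /betabar /setdiff mem_filter mem_iota andbC; congr (_ && _); lia. Qed.

Lemma sorted_uniq s : sorted ltn s -> uniq s.
Proof. by rewrite ltn_sorted_uniq_leq => /andP[]. Qed.

Lemma rowok_range d beta r : rowok d beta r -> all (fun y => 0 < y <= 2*d) r.1.
Proof.
case=> _ _ /allP H _ _; apply/allP => x /H; rewrite betabar_mem; by case/andP.
Qed.

Lemma lt_rev k j : j < k -> k - 1 - j < k.
Proof. lia. Qed.

Lemma rowok_dual d beta r : rowok d beta r -> r.2 =i map (dualn d) r.1.
Proof.
move=> R; have rng := rowok_range R.
case: R => _ _ _ _ [eqs _ _ hsum] x; apply/idP/idP.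
  case/(nthP 0) => i hi0 <-.
  have hi : i < size r.1 by rewrite eqs.
  have hj : size r.1 - 1 - i < size r.1 by lia.
  have := hsum _ hj; have -> : size r.1 - 1 - (size r.1 - 1 - i) = i by lia.
  move=> e; apply/mapP; exists (nth 0 r.1 (size r.1 - 1 - i)); first exact: mem_nth.
  by rewrite /dualn -e addKn.
case/mapP => y /(nthP 0) [j hj <-] ->.
have := hsum _ hj => e.
have -> : dualn d (nth 0 r.1 j) = nth 0 r.2 (size r.1 - 1 - j) by rewrite /dualn -e addKn.
apply: mem_nth; rewrite -eqs; exact: lt_rev.
Qed.

Lemma map_dual_uniq d (P : seq nat) : all (fun y => 0 < y <= 2*d) P -> uniq P ->
  uniq (map (dualn d) P).
Proof.
move=> /allP H uP; rewrite map_inj_in_uniq // => x y xP yP e.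
have := H x xP; have := H y yP; move: e; rewrite /dualn; lia.
Qed.

Lemma mem_theta beta r x : (x \in theta_of beta r) = (x \in r.1) || (x \in beta) && (x \notin r.2).
Proof. by rewrite /theta_of mem_sort mem_cat /setdiff mem_filter andbC. Qed.

Lemma theta_count (p : pred nat) beta r : uniq beta -> uniq r.2 -> all (fun x => x \in beta) r.2 ->
  count p (theta_of beta r) + count p r.2 = count p r.1 + count p beta.
Proof.
move=> ub u2 s2; rewrite /theta_of count_sort count_cat -addnA count_setdiff //.
Qed.

Lemma parity d beta P Q th : all (fun y => 0 < y <= 2*d) P -> perm_eq Q (map (dualn d) P) ->
  ~~ odd (count (fun x => d < x) beta) ->
  count (fun x => d < x) th + count (fun x => d < x) Q = count (fun x => d < x) P + count (fun x => d < x) beta ->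
  odd (count (fun x => d < x) th) = odd (size P).
Proof.
move=> /allP rng pQ ob e.
rewrite (perm_count _ pQ) count_map in e.
have e2 : count (preim (dualn d) (fun x => d < x)) P = count (predC (fun x => d < x)) P.
  apply: eq_in_count => x /rng hx /=; rewrite /dualn; apply/idP/idP; lia.
rewrite e2 in e; have := count_predC (fun x => d < x) P => e3.
set a := count _ th in e *; set c := count _ P in e e3; set b := count _ beta in e ob.
set f := count _ P in e e3.
have e4 : a + size P = b + f.*2 by rewrite -e3 -addnn; lia.
have := congr1 odd e4; rewrite !oddD odd_double (negbTE ob).
by case: (odd a); case: (odd (size P)).
Qed.

Lemma theta_inI d beta r : inI d beta -> rowok d beta r -> inI d (theta_of beta r).
Proof.
move=> hb R.
have rng := rowok_range R.
have pd := rowok_dual R.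
case: R => s1 s2 /allP a1 /allP a2 [eqs pos ev hsum].
have ub := inI_uniq hb; have u1 := sorted_uniq s1; have u2 := sorted_uniq s2.
have a2' : all (fun x => x \in beta) r.2 by apply/allP.
have pQ : perm_eq r.2 (map (dualn d) r.1) by apply: uniq_perm => //; apply: map_dual_uniq.
have disj : forall x, x \in r.1 -> x \notin beta by move=> x /a1; rewrite betabar_mem => /andP[].
have tc p := theta_count p ub u2 a2'.
apply/and5P; split.
- rewrite ltn_sorted_uniq_leq sort_uniq (sort_sorted leq_total) andbT cat_uniq u1 /setdiff filter_uniq // andbT.
  apply/hasPn => x; rewrite mem_filter => /andP[_ xb]; apply/negP => /disj; by rewrite xb.
- have := tc predT; rewrite !count_predT (inI_size hb) -eqs => e.
  by apply/eqP; apply: (@addIn (size r.1)); rewrite e addnC.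
- rewrite all_sort all_cat; apply/andP; split; first exact: rng.
  apply/allP => x; rewrite mem_filter => /andP[_ /(inI_range hb)] //.
- apply/allP => m; rewrite mem_iota => hm.
  have hm' : 0 < m <= 2*d by lia.
  have dm := dual_range hm'.
  rewrite !mem_theta (pd m) (pd (dualn d m)) !mem_map_dual // dualK; last by case/andP: hm'.
  rewrite (inI_pair hb hm').
  case m1: (m \in r.1); case d1: (dualn d m \in r.1); case db: (dualn d m \in beta) => //=.
  all: try (by move: (disj _ d1); rewrite db).
  all: try (by move: (disj _ m1); rewrite (inI_pair hb hm') db).
- case/and5P: hb => _ _ _ _ ob.
  by rewrite (parity rng pQ ob (tc _)).
Qed.

Lemma row_theta d beta r : inI d beta -> rowok d beta r -> row_of beta (theta_of beta r) = r.
Proof.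
move=> hb R; have ht := theta_inI hb R.
case: R => s1 s2 /allP a1 /allP a2 _.
have disj : forall x, x \in r.1 -> x \notin beta by move=> x /a1; rewrite betabar_mem => /andP[].
case: r s1 s2 a1 a2 disj ht => P Q /= s1 s2 a1 a2 disj ht; rewrite /row_of; congr pair.
  apply: (irr_sorted_eq ltn_trans ltnn); [apply: sorted_filter; [exact: ltn_trans | exact: inI_sorted ht] | exact: s1 |].
  move=> x; rewrite mem_filter mem_theta /=.
  case xP: (x \in P); first by rewrite (disj _ xP).
  by case: (x \in beta).
apply: (irr_sorted_eq ltn_trans ltnn); [apply: sorted_filter; [exact: ltn_trans | exact: inI_sorted hb] | exact: s2 |].
move=> x; rewrite mem_filter mem_theta /=.
case xQ: (x \in Q) => /=; last by case: (x \in beta); rewrite /= ?orbT ?andbF.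
have xb := a2 _ xQ; rewrite xb /= andbT orbF.
case xP: (x \in P) => //; by move: (disj _ xP); rewrite xb.
Qed.

Lemma setdiff_dual d beta th : inI d beta -> inI d th ->
  setdiff beta th =i map (dualn d) (setdiff th beta).
Proof.
move=> hb ht.
have rng : all (fun y => 0 < y <= 2*d) (setdiff th beta).
  by apply/allP => x; rewrite mem_filter => /andP[_ /(inI_range ht)].
move=> x; case xr: (0 < x <= 2*d); last first.
  rewrite mem_filter; case xb: (x \in beta); first by move: (inI_range hb xb); rewrite xr.
  rewrite andbF; apply/esym/negbTE/negP => /(map_dual_range rng); by rewrite xr.
rewrite mem_map_dual // mem_filter mem_filter (inI_pair hb xr) (inI_pair ht xr).
by case: (dualn d x \in th); case: (dualn d x \in beta).
Qed.

Lemma theta_row_id d beta th : inI d beta -> inI d th -> theta_of beta (row_of beta th) = th.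
Proof.
move=> hb ht; rewrite /theta_of /row_of /=.
have sl : sorted leq th by move: (inI_sorted ht); rewrite ltn_sorted_uniq_leq => /andP[].
transitivity (sort leq th); last by apply: sorted_sort => //; exact: leq_trans.
apply/(perm_sortP leq_total leq_trans anti_leq).
apply: uniq_perm; last first.
  move=> x; rewrite mem_cat !mem_filter.
  by case: (x \in th); case: (x \in beta).
  exact: inI_uniq ht.
rewrite cat_uniq !filter_uniq ?(inI_uniq hb) ?(inI_uniq ht) //= andbT.
apply/hasPn => x; rewrite !mem_filter => /andP[_ xb]; by rewrite xb.
Qed.

Lemma setdiff_nil (B : seq nat) : setdiff B [::] = B.
Proof. by elim: B => //= x B ->. Qed.

Lemma le_range d x : 0 < x <= 2*d -> x <= (2*d).+1.
Proof. lia. Qed.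

Lemma rev_idx k j : j < k -> k - (k - 1 - j).+1 = j.
Proof. lia. Qed.

Lemma theta_row d beta th : inI d beta -> inI d th -> th != beta -> rowok d beta (row_of beta th).
Proof.
move=> hb ht hne.
have pd := setdiff_dual hb ht.
rewrite /row_of /=.
set P := setdiff th beta; set Q := setdiff beta th.
have rng : all (fun y => 0 < y <= 2*d) P.
  by apply/allP => x; rewrite mem_filter => /andP[_ /(inI_range ht)].
have sP : sorted ltn P by apply: sorted_filter; [exact: ltn_trans | exact: inI_sorted ht].
have sQ : sorted ltn Q by apply: sorted_filter; [exact: ltn_trans | exact: inI_sorted hb].
have uP := sorted_uniq sP; have uQ := sorted_uniq sQ.
have pQ : perm_eq Q (map (dualn d) P) by apply: uniq_perm => //; apply: map_dual_uniq.
have szQ : size Q = size P by rewrite (perm_size pQ) size_map.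
have aQ : all (fun x => x \in beta) Q by apply/allP => x; rewrite mem_filter => /andP[].
have tr := theta_row_id hb ht; rewrite /row_of -/P -/Q in tr.
split => //.
- apply/allP => x; rewrite mem_filter betabar_mem => /andP[xb xt].
  by rewrite xb andbT; exact: inI_range ht xt.
split => //.
- case: (posnP (size P)) => // /size0nil P0.
  move: szQ; rewrite P0 => /size0nil Q0.
  move: tr; rewrite P0 Q0 /theta_of /= setdiff_nil sorted_sort; last first.
    by move: (inI_sorted hb); rewrite ltn_sorted_uniq_leq => /andP[].
    exact: leq_trans.
  by move=> e; move: hne; rewrite e eqxx.
- have tc := @theta_count (fun x => d < x) beta (P, Q) (inI_uniq hb) uQ aQ.
  rewrite /= tr in tc.
  case/and5P: hb => _ _ _ _ ob.
  rewrite -(parity rng pQ ob tc).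
  by case/and5P: ht.
- have eQ : Q = rev (map (dualn d) P).
    apply: (irr_sorted_eq ltn_trans ltnn) => //.
      rewrite rev_sorted sorted_map.
      apply: (sub_in_sorted (P := fun y => 0 < y <= 2*d) (e := ltn)) => //.
      move=> x y hx hy /=; rewrite /dualn; lia.
    by move=> x; rewrite mem_rev pd.
  move=> j hj; rewrite eQ nth_rev size_map; last exact: lt_rev.
  rewrite rev_idx // (nth_map 0) // /dualn subnKC //.
  have := allP rng _ (mem_nth 0 hj); exact: le_range.
Qed.

Lemma rowok_uniq2 d beta r : rowok d beta r -> uniq r.2.
Proof. by case=> _ /sorted_uniq. Qed.

Lemma rowok_sub2 d beta r : rowok d beta r -> all (fun x => x \in beta) r.2.
Proof. by case. Qed.

Lemma tcnt d beta r z : inI d beta -> rowok d beta r ->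
  cnt_le z (theta_of beta r) + cnt_le z r.2 = cnt_le z r.1 + cnt_le z beta.
Proof.
move=> hb R; exact: theta_count (inI_uniq hb) (rowok_uniq2 R) (rowok_sub2 R).
Qed.

Lemma theta_size d beta r : inI d beta -> rowok d beta r -> size (theta_of beta r) = d.
Proof. by move=> hb R; apply: inI_size; apply: theta_inI. Qed.

Lemma leS_rows d beta r1 r2 : inI d beta -> rowok d beta r1 -> rowok d beta r2 ->
  leS (theta_of beta r1) (theta_of beta r2) <-> diff_le r1.1 r1.2 r2.1 r2.2.
Proof.
move=> hb R1 R2.
rewrite leS_cnt; last by rewrite !(theta_size hb).
rewrite diff_leE; split=> H z; have := H z;
  have := tcnt z hb R1; have := tcnt z hb R2; lia.
Qed.

Lemma leS_alpha d alpha beta r : inI d alpha -> inI d beta -> rowok d beta r ->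
  leS alpha (theta_of beta r) <-> diff_le (setdiff alpha beta) (setdiff beta alpha) r.1 r.2.
Proof.
move=> ha hb R.
rewrite leS_cnt; last by rewrite (theta_size hb R) (inI_size ha).
have c2 z := count_setdiff2 (fun x => x <= z) (inI_uniq ha) (inI_uniq hb).
rewrite diff_leE; split=> H z; have := H z; have := c2 z;
  have := tcnt z hb R; rewrite /cnt_le; lia.
Qed.

Lemma leS_gamma d gamma beta r : inI d gamma -> inI d beta -> rowok d beta r ->
  leS (theta_of beta r) gamma <-> diff_le r.1 r.2 (setdiff gamma beta) (setdiff beta gamma).
Proof.
move=> ha hb R.
rewrite leS_cnt; last by rewrite (theta_size hb R) (inI_size ha).
have c2 z := count_setdiff2 (fun x => x <= z) (inI_uniq ha) (inI_uniq hb).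
rewrite diff_leE; split=> H z; have := H z; have := c2 z;
  have := tcnt z hb R; rewrite /cnt_le; lia.
Qed.

Lemma all2_flip (r : rel nat) s t : all2 r s t = all2 (fun x y => r y x) t s.
Proof. by elim: s t => [|x s IH] [|y t] //=; rewrite IH. Qed.

Lemma all2_leq_ltn s t : (forall x, x \in s -> x \notin t) -> all2 leq s t = all2 ltn s t.
Proof.
elim: s t => [|x s IH] [|y t] //= H.
rewrite IH; last by move=> z zs; have := H z; rewrite !inE zs orbT => /(_ isT); rewrite negb_or => /andP[].
rewrite ltn_neqAle; have := H x; rewrite !inE eqxx /= => /(_ isT); rewrite negb_or => /andP[xy _].
by rewrite xy.
Qed.

Lemma sorted_leq_of_ltn s : sorted ltn s -> sorted leq s.
Proof. by rewrite ltn_sorted_uniq_leq => /andP[]. Qed.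

Lemma sort_id s : sorted ltn s -> sort leq s = s.
Proof. move/sorted_leq_of_ltn => h; apply: sorted_sort => //; exact: leq_trans. Qed.

Lemma theta_neq d beta r : rowok d beta r -> sort leq (theta_of beta r) != sort leq beta.
Proof.
case=> s1 _ /allP a1 _ [_ pos _ _].
apply/negP => /eqP e.
have : nth 0 r.1 0 \in sort leq (theta_of beta r) by rewrite mem_sort mem_theta mem_nth.
rewrite e mem_sort; have := a1 _ (mem_nth 0 pos); rewrite betabar_mem => /andP[_ /negbTE ->] //.
Qed.

Lemma ltS_row1 d beta r : inI d beta -> rowok d beta r ->
  ltS (theta_of beta r) beta = lt_empty r.1 r.2.
Proof.
move=> hb R; rewrite /ltS (theta_neq R) andbT /lt_empty.
case: (R) => s1 s2 /allP a1 /allP a2 [sz _ _ _].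
rewrite (sort_id s1) (sort_id s2) -all2_leq_ltn; last first.
  move=> x /a1; rewrite betabar_mem => /andP[_ xb]; apply/negP => /a2; by rewrite (negbTE xb).
apply/idP/idP.
  move/(leS_cnt (etrans (theta_size hb R) (esym (inI_size hb)))) => H.
  apply: sorted_cnt_all2; try exact: sorted_leq_of_ltn.
    exact: sz.
  by move=> z; have := H z; have := tcnt z hb R; lia.
move/all2_cnt => H; apply/(leS_cnt (etrans (theta_size hb R) (esym (inI_size hb)))) => z.
by have := H z; have := tcnt z hb R; lia.
Qed.

Lemma ltS_row2 d beta r : inI d beta -> rowok d beta r ->
  ltS beta (theta_of beta r) = gt_empty r.1 r.2.
Proof.
move=> hb R; rewrite /ltS eq_sym (theta_neq R) andbT /gt_empty.
case: (R) => s1 s2 /allP a1 /allP a2 [sz _ _ _].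
rewrite (sort_id s1) (sort_id s2) -(all2_flip ltn) -all2_leq_ltn; last first.
  move=> x /a2 xb; apply/negP => /a1; rewrite betabar_mem xb andbF //.
apply/idP/idP.
  move/(leS_cnt (etrans (inI_size hb) (esym (theta_size hb R)))) => H.
  apply: sorted_cnt_all2; try exact: sorted_leq_of_ltn.
    exact: esym sz.
  by move=> z; have := H z; have := tcnt z hb R; lia.
move/all2_cnt => H; apply/(leS_cnt (etrans (inI_size hb) (esym (theta_size hb R)))) => z.
by have := H z; have := tcnt z hb R; lia.
Qed.

Lemma bdeg_row d beta r : inI d beta -> rowok d beta r -> bdeg beta (theta_of beta r) = size r.1 %/ 2.
Proof.
move=> hb R; rewrite /bdeg; have := row_theta hb R; rewrite /row_of.
by case: r R => P Q R [->].
Qed.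

Lemma path_rcons_iff (X : Type) (e : rel X) (a b x0 : X) (s : seq X) : 0 < size s ->
  path e a (rcons s b) <->
  [/\ e a (nth x0 s 0), (forall i, i.+1 < size s -> e (nth x0 s i) (nth x0 s i.+1)) &
      e (last x0 s) b].
Proof.
elim: s a => [|x s IH] a // _; rewrite rcons_cons /=.
case: s IH => [|y s] IH.
  split; first by case/andP=> h1 /andP[h2 _]; split => // -[].
  by case=> -> _ /= ->.
split.
  case/andP => h1 /(IH x isT) [h2 h3 h4]; split => //.
  by case=> [|i] /= hi; [exact: h2 | exact: h3].
case=> h1 h2 h3; rewrite h1 /=; apply/(IH x isT); split => //.
- exact: (h2 0).
- by move=> i hi; exact: (h2 i.+1).
Qed.

Lemma sumn_half (X : Type) (f : X -> nat) s : all (fun x => ~~ odd (f x)) s ->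
  sumn (map (fun x => f x %/ 2) s) = sumn (map f s) %/ 2.
Proof.
elim: s => [|x s IH] //= /andP[ex es].
by rewrite IH // divnDl // dvdn2.
Qed.

Lemma skew_rowok d beta T : skew_symmetric_on d beta T -> forall r, r \in T -> rowok d beta r.
Proof.
case=> [[[/allP hsz /allP hsort _] /allP hev _] /allP h1 /allP h2 /allP hp] r rT.
have /andP[s1 s2] := hsort r rT; have /andP[/eqP sz pos] := hsz r rT.
split => //; try exact: h1; try exact: h2.
split => //; first exact: hev.
move=> j hj.
have : (nth 0 r.1 j, nth 0 r.2 (size r.1 - 1 - j)) \in dual_pairs T.
  rewrite /dual_pairs; apply/flattenP; eexists; first by apply/mapP; exists r.
  rewrite /= mem_cat; apply/orP; left; apply/mapP; exists j => //.
  by rewrite mem_iota.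
by move/hp => /eqP.
Qed.

Lemma sub_rev k j : j < k -> k - 1 - (k - 1 - j) = j.
Proof. lia. Qed.

Lemma skew_arith a b c e N : a + b = N -> c + e = N -> (a < c -> e < b) /\ (a = c -> b = e).
Proof. lia. Qed.

Lemma rowok_skew d beta T : (forall r, r \in T -> rowok d beta r) ->
  (forall i, i.+1 < size T ->
        diff_le (nth ([::], [::]) T i).1 (nth ([::], [::]) T i).2
                (nth ([::], [::]) T i.+1).1 (nth ([::], [::]) T i.+1).2) ->
  skew_symmetric_on d beta T.
Proof.
move=> R cons.
have hp : all (fun p => p.1 + p.2 == (2 * d).+1) (dual_pairs T).
  apply/allP => p /flattenP [s /mapP [r rT ->]].
  case: (R r rT) => _ _ _ _ [sz _ _ hsum].
  rewrite mem_cat => /orP[] /mapP [j]; rewrite mem_iota add0n => /andP[_ hj] -> /=.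
    by rewrite hsum.
  by rewrite addnC -{2}(sub_rev hj) hsum // lt_rev.
split => //.
- split => //.
  + split => //.
    * by apply/allP => r /R [_ _ _ _ [-> ->]]; rewrite eqxx.
    * by apply/allP => r /R [-> ->].
  + by apply/allP => r /R [_ _ _ _ []].
  + move=> p q /(allP hp) /eqP e1 /(allP hp) /eqP e2; exact: skew_arith e1 e2.
- by apply/allP => r /R [].
- by apply/allP => r /R [].
Qed.

Lemma sumn_double (X : Type) (f : X -> nat) s : all (fun x => ~~ odd (f x)) s ->
  sumn (map f s) = 2 * sumn (map (fun x => f x %/ 2) s).
Proof.
elim: s => [|x s IH] //= /andP[ex es].
rewrite IH // mulnDr; congr (_ + _).
by rewrite mulnC divnK // dvdn2.
Qed.

Definition consec (T : bitableau) : Prop :=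
  forall i, i.+1 < size T ->
        diff_le (nth ([::], [::]) T i).1 (nth ([::], [::]) T i).2
                (nth ([::], [::]) T i.+1).1 (nth ([::], [::]) T i.+1).2.

Lemma core d m alpha beta gamma T : inI d alpha -> inI d beta -> inI d gamma ->
  (forall r, r \in T -> rowok d beta r) -> 0 < size T ->
  (mon_set d m alpha beta gamma (tab_to_mon beta T) <->
   [/\ nonvanishing T, consec T, bounded alpha beta gamma T & tdegree T = 2 * m]).
Proof.
move=> ha hb hc R szT.
set x0 := theta_of beta ([::], [::]).
have nthS i : i < size T -> nth x0 (tab_to_mon beta T) i = theta_of beta (nth ([::], [::]) T i).
  by move=> hi; rewrite /tab_to_mon (nth_map ([::], [::])).
have nthR i : i < size T -> rowok d beta (nth ([::], [::]) T i).
  by move=> hi; apply: R; apply: mem_nth.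
have hd : head ([::], [::]) T = nth ([::], [::]) T 0 by case: (T).
have lR : rowok d beta (last ([::], [::]) T).
  by case: (T) R szT => // t T0 R0 _; apply: R0 => /=; exact: mem_last.
have lS : last x0 (tab_to_mon beta T) = theta_of beta (last ([::], [::]) T) by rewrite /tab_to_mon last_map.
have szS : size (tab_to_mon beta T) = size T by rewrite size_map.
have allI : all (inI d) (tab_to_mon beta T).
  by apply/allP => th /mapP [r rT ->]; apply: theta_inI => //; apply: R.
have ev : all (fun r => ~~ odd (size r.1)) T by apply/allP => r /R [_ _ _ _ []].
have mdeg : mdegree beta (tab_to_mon beta T) = sumn (map (fun r => size r.1 %/ 2) T).
  rewrite /mdegree /tab_to_mon -map_comp; congr sumn; apply/eq_in_map => r rT /=.
  exact: bdeg_row hb (R r rT).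
have tdeg : tdegree T = 2 * sumn (map (fun r => size r.1 %/ 2) T).
  by rewrite /tdegree (sumn_double ev).
have nv : all (fun th => ltS th beta || ltS beta th) (tab_to_mon beta T) = nonvanishing T.
  rewrite /tab_to_mon all_map; apply: eq_in_all => r rT /=.
  by rewrite (ltS_row1 hb (R r rT)) (ltS_row2 hb (R r rT)).
split.
- case=> [[_ hpath hlt] hdeg].
  have := (path_rcons_iff leS alpha gamma x0 _).
  move=> /(_ (tab_to_mon beta T)); rewrite szS => /(_ szT) [] /(_ hpath) [p1 p2 p3] _.
  split.
  + by rewrite -nv.
  + move=> i hi; have h1 : i < size T := ltnW hi.
    rewrite -(leS_rows hb (nthR _ h1) (nthR _ hi)) -!nthS //; apply: p2; by rewrite ?szS.
  + split => //.
    * rewrite hd -(leS_alpha ha hb (nthR _ szT)).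
      by rewrite -nthS.
    * rewrite -(leS_gamma hc hb lR). by rewrite -lS.
  + by rewrite tdeg -mdeg hdeg.
- case=> hnv hcons [_ hb1 hb2] hdeg.
  split; last first.
    by rewrite mdeg; move: hdeg; rewrite tdeg; lia.
  split => //; last by rewrite nv.
  have := (path_rcons_iff leS alpha gamma x0 _).
  move=> /(_ (tab_to_mon beta T)); rewrite szS => /(_ szT) [] _; apply; split.
  + rewrite nthS // (leS_alpha ha hb (nthR _ szT)).
    by rewrite -hd.
  + move=> i; rewrite ?szS => hi; have h1 : i < size T := ltnW hi.
    rewrite !nthS // (leS_rows hb (nthR _ h1) (nthR _ hi)).
    exact: hcons.
  + by rewrite lS (leS_gamma hc hb lR).
Qed.

Unset Implicit Arguments.

Theorem lemma8p2 (d : nat) (alpha beta gamma : seq nat) :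
  inI d alpha -> inI d beta -> inI d gamma ->
  leS alpha beta -> leS beta gamma ->
  forall m : nat, 0 < m ->
  [/\ (forall T, tab_set d m alpha beta gamma T ->
                 mon_set d m alpha beta gamma (tab_to_mon beta T)),
      (forall T1 T2, tab_set d m alpha beta gamma T1 ->
                     tab_set d m alpha beta gamma T2 ->
                     tab_to_mon beta T1 = tab_to_mon beta T2 -> T1 = T2) &
      (forall S, mon_set d m alpha beta gamma S ->
                 exists2 T, tab_set d m alpha beta gamma T & tab_to_mon beta T = S)].
Proof.
move=> ha hb hc _ _ m m0.
have fwd T : tab_set d m alpha beta gamma T ->
    (forall r, r \in T -> rowok d beta r) /\ mon_set d m alpha beta gamma (tab_to_mon beta T).
  case=> sk nv bd dg.
  have R := skew_rowok sk.
  split => //.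
  case: (bd) => szT _ _.
  apply/(core m ha hb hc R szT); split => //.
  by case: sk => [[[_ _ ?]]].
split.
- by move=> T /fwd [].
- move=> T1 T2 /fwd [R1 _] /fwd [R2 _] e.
  have inv T : (forall r, r \in T -> rowok d beta r) -> map (row_of beta) (tab_to_mon beta T) = T.
    move=> R; rewrite /tab_to_mon -map_comp -{2}(map_id T); apply/eq_in_map => r rT /=.
    exact: row_theta hb (R r rT).
  by rewrite -(inv _ R1) e inv.
- move=> S [[allI hpath hlt] hdeg].
  have neq th : th \in S -> th != beta.
    move=> thS; apply/negP => /eqP e; move: (allP hlt _ thS); rewrite e /ltS eqxx.
    by rewrite !andbF.
  have R : forall r, r \in map (row_of beta) S -> rowok d beta r.
    move=> r /mapP [th thS ->]; apply: theta_row => //; [exact: (allP allI) | exact: neq].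
  have hS : tab_to_mon beta (map (row_of beta) S) = S.
    rewrite /tab_to_mon -map_comp -{2}(map_id S); apply/eq_in_map => th thS /=.
    exact: theta_row_id hb (allP allI _ thS).
  have szT : 0 < size (map (row_of beta) S).
    rewrite size_map; case: (S) hdeg => [|? ?] // h; move: m0; rewrite -h; by [].
  exists (map (row_of beta) S); last exact: hS.
  have [H _] := core m ha hb hc R szT.
  rewrite hS in H.
  case: (H (conj (And3 allI hpath hlt) hdeg)) => hnv hcons hbd hdg; split => //.
  exact: rowok_skew.
Qed.
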